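(* Let $\mathcal V$ be a finite set, $2\le k\le|\mathcal V|-2$, and suppose that the code $\Gamma\subset\binom{\mathcal V}{k}$ admits a subgroup $G\le{\rm Aut}(\Gamma)\cap{\rm Sym}(\mathcal V)$ such that $\Gamma$ is $G$-neighbour-transitive and $G$ is intransitive on $\mathcal V$. Then there is a proper non-empty subset $\mathcal U\subset\mathcal V$ such that: $\Gamma$ is the set of all $k$-subsets of $\mathcal U$ if $|\mathcal U|>k$; $\Gamma=\{\mathcal U\}$ if $|\mathcal U|=k$; $\Gamma$ is the set of all $k$-subsets of $\mathcal V$ containing $\mathcal U$ if $|\mathcal U|<k$.
   Context: The Johnson graph $J(|\mathcal V|,k)$ has vertex set $\binom{\mathcal V}{k}$, the $k$-subsets of $\mathcal V$, two being adjacent iff they meet in $k-1$ points. A code is a proper non-empty subset $\Gamma\subset\binom{\mathcal V}{k}$; its neighbour set $\Gamma_1$ is the set of $k$-subsets not in $\Gamma$ adjacent to some codeword. ${\rm Aut}(\Gamma)$ is the setwise stabiliser of $\Gamma$ in ${\rm Aut}(J(|\mathcal V|,k))$. $\Gamma$ is $G$-neighbour-transitive if $G$ is transitive on both $\Gamma$ and $\Gamma_1$. *)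

(* Defs.v *)
From mathcomp Require Import all_boot all_fingroup.
Set Implicit Arguments. Unset Strict Implicit. Unset Printing Implicit Defensive.

Definition ksubsets (V : finType) (k : nat) : {set {set V}} :=
  [set A : {set V} | #|A| == k].

Definition johnson_adj (V : finType) (k : nat) (A B : {set V}) : bool :=
  [&& #|A| == k, #|B| == k & #|A :&: B| == k.-1].

Definition neighbours (V : finType) (k : nat) (Gam : {set {set V}})
  : {set {set V}} :=
  [set B in ksubsets V k | (B \notin Gam) && [exists A in Gam, johnson_adj k A B]].

Definition is_code (V : finType) (k : nat) (Gam : {set {set V}}) : Prop :=
  Gam != set0 /\ Gam \proper ksubsets V k.

Definition neighbour_transitive (V : finType) (k : nat)
  (G : {group {perm V}}) (Gam : {set {set V}}) : Prop :=
  [transitive G, on Gam | 'P^*] /\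
  [transitive G, on neighbours k Gam | 'P^*].

(* Main.v *)
Require Import Defs.
From mathcomp Require Import all_boot all_fingroup.
From mathcomp Require Import zify.
Set Implicit Arguments. Unset Strict Implicit. Unset Printing Implicit Defensive.
Section S.
Variable V : finType.
Implicit Types A B C D E X : {set V}.

Lemma swap_card A a b : a \in A -> b \notin A -> #|b |: (A :\ a)| = #|A|.
Proof.
move=> aA bA; rewrite cardsU1 (cardsD1 a A) aA !inE (negbTE bA) andbF /=.
by rewrite add1n.
Qed.

Lemma swap_inter A a b : b \notin A -> A :&: (b |: (A :\ a)) = A :\ a.
Proof.
move=> bA; apply/setP=> x; rewrite !inE.
case: (x =P b) => [->|_]; first by rewrite (negbTE bA) andbF.
by case: (x \in A); case: (x != a).
Qed.

Lemma swap_cnt A D a b : a \in A -> b \notin A ->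
  #|(b |: (A :\ a)) :&: D| + (a \in D) = #|A :&: D| + (b \in D).
Proof.
move=> aA bA.
have -> : #|A :&: D| = (a \in D) + #|(A :&: D) :\ a|.
  by rewrite (cardsD1 a (A :&: D)) !inE aA.
case bD: (b \in D).
- have -> : (b |: (A :\ a)) :&: D = b |: ((A :&: D) :\ a).
    apply/setP=> x; rewrite !inE; case: (x =P b) => [->|_] /=;
    by rewrite ?bD ?(negbTE bA) ?andbF ?andbA.
  rewrite cardsU1 !inE (negbTE bA) !andbF /=; lia.
- have -> : (b |: (A :\ a)) :&: D = ((A :&: D) :\ a).
    apply/setP=> x; rewrite !inE; case: (x =P b) => [->|_] /=;
    by rewrite ?bD ?(negbTE bA) ?andbF ?andbA.
  lia.
Qed.

Lemma cardIC A D : #|A :&: D| + #|A :&: ~: D| = #|A|.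
Proof. by rewrite -setDE cardsID. Qed.

End S.

Section S.
Variable V : finType.
Implicit Types A B C D E X : {set V}.

Lemma fill (P : {set {set V}}) D :
 (forall X a b, X \in P -> a \in X -> b \notin X -> (a \in D) = (b \in D) ->
    b |: (X :\ a) \in P) ->
 forall n A C, #|C :\: A| = n -> A \in P -> #|C| = #|A| ->
   #|C :&: D| = #|A :&: D| -> C \in P.
Proof.
move=> clo n; elim: n => [|n IH] A C hn AP cC cD.
  have: C \subset A by rewrite -setD_eq0 -cards_eq0 hn.
  move=> sCA; have -> : C = A.
    by apply/eqP; rewrite eqEcard sCA cC leqnn.
  done.
have: 0 < #|C :\: A| by rewrite hn.
rewrite card_gt0 => /set0Pn [b bCA].
have bC : b \in C by move: bCA; rewrite inE => /andP[].
have bA : b \notin A by move: bCA; rewrite inE => /andP[].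
pose E := if b \in D then D else ~: D.
have bE : b \in E by rewrite /E; case: ifP => //; rewrite inE => ->.
have cE : #|C :&: E| = #|A :&: E|.
  rewrite /E; case: ifP => _ //.
  have := cardIC C D; have := cardIC A D; lia.
have e1 := cardsID A (C :&: E).
have e2 := cardsID C (A :&: E).
have hI : C :&: E :&: A = A :&: E :&: C.
  by apply/setP=> x; rewrite !inE; case: (x \in C); case: (x \in E); case: (x \in A).
rewrite hI in e1.
have h1 : C :&: E :\: A = (C :\: A) :&: E.
  by apply/setP=> x; rewrite !inE; case: (x \in C); case: (x \in E); case: (x \in A).
have h2 : A :&: E :\: C = (A :\: C) :&: E.
  by apply/setP=> x; rewrite !inE; case: (x \in C); case: (x \in E); case: (x \in A).
have : 0 < #|(C :\: A) :&: E| by rewrite card_gt0; apply/set0Pn; exists b; rewrite inE bCA bE.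
move=> pos.
have : 0 < #|(A :\: C) :&: E| by rewrite -h2; rewrite h1 in e1; lia.
rewrite card_gt0 => /set0Pn [a].
rewrite !inE => /andP [/andP [aC aA] aE].
have abD : (a \in D) = (b \in D).
  move: aE bE; rewrite /E; case: ifP => bD; first by move=> ->.
  by rewrite inE => /negbTE ->.
pose A' := b |: (A :\ a).
have A'P : A' \in P by apply: clo.
apply: (IH A') => //.
- have -> : C :\: A' = (C :\: A) :\ b.
    apply/setP=> x; rewrite !inE.
    case: (x =P b) => [->|nxb] /=; first by [].
    case: (x =P a) => [->|nxa] /=; first by rewrite (negbTE aC) !andbF.
    by [].
  by move: hn; rewrite (cardsD1 b (C :\: A)) bCA add1n => [[]].
- by rewrite /A' swap_card.
- have := swap_cnt D aA bA; rewrite abD -/A'; lia.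
Qed.
End S.

Section S.
Variable V : finType.
Implicit Types A B C D E X : {set V}.

Lemma swap_adj k A a b : #|A| = k -> a \in A -> b \notin A ->
  johnson_adj k A (b |: (A :\ a)).
Proof.
move=> cA aA bA; rewrite /johnson_adj cA eqxx swap_card // cA eqxx /=.
by rewrite swap_inter // -cA (cardsD1 a A) aA add1n.
Qed.

Lemma no3 (Gam : {set {set V}}) k E i j A0 :
  (forall A, A \in Gam -> #|A| = k /\ #|A :&: E| = i) ->
  (forall A B, A \in Gam -> johnson_adj k A B -> B \in Gam \/ #|B :&: E| = j) ->
  j.+1 != i -> A0 \in Gam ->
  (A0 :&: E == set0) || (~: E \subset A0).
Proof.
move=> hG hadj hji A0G.
case: (boolP (A0 :&: E == set0)) => [//|/set0Pn [a aAE]] /=.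
have aA : a \in A0 by move: aAE; rewrite inE => /andP[].
have aE : a \in E by move: aAE; rewrite inE => /andP[].
apply/subsetP => b bE; apply/negPn/negP => bA.
have [cA cAE] := hG _ A0G.
have hc := swap_cnt E aA bA; rewrite aE (negbTE (_ : b \notin E)) in hc; last first.
  by move: bE; rewrite inE.
have := hadj _ _ A0G (swap_adj cA aA bA); case=> [BG|cB].
  have [_ cB] := hG _ BG; lia.
move/eqP: hji; lia.
Qed.

Lemma mainM (Gam : {set {set V}}) k D i j A0 :
  (forall A, A \in Gam -> #|A| = k /\ #|A :&: D| = i) ->
  (forall A B, A \in Gam -> johnson_adj k A B -> B \in Gam \/ #|B :&: D| = j) ->
  j != i -> j.+1 != i -> A0 \in Gam -> D != set0 -> ~: D != set0 ->
  exists U : {set V},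
    [/\ U != set0, U \proper [set: V],
        (k < #|U| -> Gam = [set A in ksubsets V k | A \subset U]),
        (#|U| = k -> Gam = [set U]) &
        (#|U| < k -> Gam = [set A in ksubsets V k | U \subset A])].
Proof.
move=> hG hadj hji hji1 A0G D0 CD0.
have clo : forall X a b, X \in Gam -> a \in X -> b \notin X -> (a \in D) = (b \in D) ->
    b |: (X :\ a) \in Gam.
  move=> X a b XG aX bX abD.
  have [cX cXD] := hG _ XG.
  case: (hadj _ _ XG (swap_adj cX aX bX)) => // cB.
  have := swap_cnt D aX bX; rewrite abD cB cXD => h.
  by move/eqP: hji; lia.
have [cA0 cA0D] := hG _ A0G.
have full : forall C, (C \in Gam) = (#|C| == k) && (#|C :&: D| == i).
  move=> C; apply/idP/idP.
    by move=> /hG [-> ->]; rewrite !eqxx.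
  case/andP=> /eqP cC /eqP cCD.
  apply: (fill clo (erefl #|C :\: A0|) A0G); lia.
have h3 := no3 hG hadj hji1 A0G.
have key1 : A0 :&: D = set0 -> forall C, (C \in Gam) = (#|C| == k) && (C \subset ~: D).
  move=> e C; rewrite full; rewrite e cards0 in cA0D; subst i.
  by rewrite cards_eq0 setI_eq0 disjoints_subset.
have key2 : ~: D \subset A0 -> forall C, (C \in Gam) = (#|C| == k) && (~: D \subset C).
  move=> s C; rewrite full.
  have hi : i + #|~: D| = k by have := cardIC A0 D; rewrite (setIidPr s); lia.
  case: (eqVneq #|C| k) => //= cC.
  have hC := cardIC C D; rewrite cC in hC.
  have -> : (#|C :&: D| == i) = (#|C :&: ~: D| == #|~: D|) by apply/eqP/eqP; lia.
  rewrite (subset_leqif_cards (subsetIr C (~: D))).2.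
  apply/eqP/idP => [h|h]; first by apply/setIidPr.
  by apply/setIidPr.
exists (~: D); split => //.
- by rewrite properT; apply: contra D0 => /eqP h; rewrite -(setCK D) h setCT.
- move=> hU; case/orP: h3 => [/eqP e|s].
    by apply/setP=> C; rewrite inE key1 // /ksubsets inE.
  by have := subset_leq_card s; lia.
- move=> hU; case/orP: h3 => [/eqP e|s].
    apply/setP=> C; rewrite key1 // inE; apply/andP/eqP => [[/eqP cC sCU]|->].
      by apply/eqP; rewrite eqEcard sCU cC hU leqnn.
    by rewrite hU eqxx subxx.
  apply/setP=> C; rewrite key2 // inE; apply/andP/eqP => [[/eqP cC sCU]|->].
    by apply/esym/eqP; rewrite eqEcard sCU cC hU leqnn.
  by rewrite hU eqxx subxx.
- move=> hU; case/orP: h3 => [/eqP e|s].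
    have := key1 e A0; rewrite A0G => /esym/andP [_ /subset_leq_card]; lia.
  by apply/setP=> C; rewrite inE key2 // /ksubsets inE.
Qed.
End S.


Lemma PstarE (V:finType) (A : {set V}) (g : {perm V}) :
  'P^*%act A g = [set g x | x in A].
Proof. by apply/setP=> z; rewrite /= /setact. Qed.

Lemma cnt_inv (V : finType) (E A : {set V}) (g : {perm V}) :
  (forall y, (g y \in E) = (y \in E)) -> #|'P^*%act A g :&: E| = #|A :&: E|.
Proof.
move=> hE; rewrite PstarE.
have -> : [set g y | y in A] :&: E = [set g y | y in A :&: E].
  apply/setP=> z; apply/idP/idP.
    rewrite inE => /andP [/imsetP [y yA ->]]; rewrite hE => yE.
    by apply/imsetP; exists y => //; rewrite inE yA.
  move=> /imsetP [y]; rewrite inE => /andP [yA yE] ->.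
  by rewrite inE hE yE andbT; apply/imsetP; exists y.
by rewrite card_imset //; apply: perm_inj.
Qed.

Lemma cnt_trans (V : finType) (G : {group {perm V}}) (S : {set {set V}}) (E A0 : {set V}) :
  [transitive G, on S | 'P^*] -> A0 \in S ->
  (forall g, g \in G -> forall y, (g y \in E) = (y \in E)) ->
  forall A, A \in S -> #|A :&: E| = #|A0 :&: E|.
Proof.
move=> tS A0S hE A AS.
have [g gG ->] := atransP2 tS A0S AS.
by apply: cnt_inv; apply: hE.
Qed.

Lemma arith_aux k n : 1 < k -> k <= n - 2 -> k = n -> False.
Proof. lia. Qed.

Unset Implicit Arguments. Set Strict Implicit.
Theorem proposition3p3 (V : finType) (k : nat) (Gam : {set {set V}})
  (G : {group {perm V}}) :
  2 <= k -> k <= #|V| - 2 ->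
  is_code k Gam ->
  G \subset ('N(Gam | 'P^*))%g ->
  neighbour_transitive k G Gam ->
  ~~ [transitive G, on [set: V] | 'P] ->
  exists U : {set V},
    [/\ U != set0, U \proper [set: V],
        (k < #|U| -> Gam = [set A in ksubsets V k | A \subset U]),
        (#|U| = k -> Gam = [set U]) &
        (#|U| < k -> Gam = [set A in ksubsets V k | U \subset A])].
Proof.
move=> hk2 hkn [G0 Gpr] _ [tG tN] ntr.
have cardG : forall A, A \in Gam -> #|A| = k.
  by move=> A /(subsetP (proper_sub Gpr)); rewrite inE => /eqP.
have [A0 A0G] := set0Pn _ G0.
have N0 : neighbours k Gam != set0.
  apply/negP => /eqP e; move: tN; rewrite e /atrans imset0 inE; exact.
have [B0 B0N] := set0Pn _ N0.
have cB0 : #|B0| = k by move: B0N; rewrite !inE => /andP [/eqP].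
have [x xA0] : exists x, x \in A0.
  by apply/set0Pn; rewrite -card_gt0 cardG //; lia.
pose D := orbit 'P G x.
have Dinv : forall g, g \in G -> forall y, (g y \in D) = (y \in D).
  by move=> g gG y; rewrite /D -(orbit_actr 'P x y gG).
have Cinv : forall g, g \in G -> forall y, (g y \in ~: D) = (y \in ~: D).
  by move=> g gG y; rewrite !inE Dinv.
have D0 : D != set0 by apply/set0Pn; exists x; apply: orbit_refl.
have CD0 : ~: D != set0.
  apply: contra ntr => /eqP e.
  have eD : D = setT by rewrite -(setCK D) e setC0.
  by apply/imsetP; exists x; rewrite ?inE // eD.
clearbody D.
have hadjE : forall E : {set V}, (forall g, g \in G -> forall y, (g y \in E) = (y \in E)) ->
    forall A B, A \in Gam -> johnson_adj k A B -> B \in Gam \/ #|B :&: E| = #|B0 :&: E|.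
  move=> E hE A B AG adj.
  case: (boolP (B \in Gam)) => BG; [by left | right].
  apply: (cnt_trans tN B0N hE).
  have := adj; rewrite /johnson_adj => /and3P [_ cB _].
  rewrite !inE cB BG /=; apply/existsP; exists A.
  by rewrite AG adj.
have hGD : forall A, A \in Gam -> #|A| = k /\ #|A :&: D| = #|A0 :&: D|.
  by move=> A AG; split; [apply: cardG | apply: (cnt_trans tG A0G Dinv)].
have hGC : forall A, A \in Gam -> #|A| = k /\ #|A :&: ~: D| = #|A0 :&: ~: D|.
  by move=> A AG; split; [apply: cardG | apply: (cnt_trans tG A0G Cinv)].
have hAD := hadjE D Dinv; have hAC := hadjE (~: D) Cinv.
have r1 := cardIC A0 D; have r2 := cardIC B0 D.
rewrite (cardG _ A0G) in r1; rewrite cB0 in r2.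
case: (eqVneq #|B0 :&: D| #|A0 :&: D|) => eji.
  have h1 : #|B0 :&: D|.+1 != #|A0 :&: D| by apply/eqP; lia.
  have h2 : #|B0 :&: ~: D|.+1 != #|A0 :&: ~: D| by apply/eqP; lia.
  have n1 := no3 hGD hAD h1 A0G.
  have n2 := no3 hGC hAC h2 A0G.
  rewrite setCK in n2.
  have := cardsC D; have := cardIC A0 D; rewrite (cardG _ A0G) => r3 r4.
  case/orP: n1 => [/eqP e1|s1]; case/orP: n2 => [/eqP e2|s2].
  - by rewrite e1 e2 cards0 in r3; rewrite -r3 in hk2.
  - by move: D0; rewrite -{1}(setIidPr s2) e1 eqxx.
  - by move: CD0; rewrite -{1}(setIidPr s1) e2 eqxx.
  - rewrite (setIidPr s1) (setIidPr s2) in r3; rewrite r3 in r4.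
    by case: (arith_aux hk2 hkn r4).
case: (eqVneq #|B0 :&: D|.+1 #|A0 :&: D|) => e1.
  apply: (mainM hGC hAC _ _ A0G CD0); first by apply/eqP; lia.
  - by apply/eqP; lia.
  - by rewrite setCK.
apply: (mainM hGD hAD eji e1 A0G D0 CD0).
Qed.
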